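(* Let $w_0\in\mathcal C^2(\mathbb R)$ with $w_0'$ bounded, and assume the limits $w_0'(\pm\infty):=\lim_{x\to\pm\infty}w_0'(x)$ exist and are finite. Let $w$ be a classical solution of problem (P) on $[0,t_* )\times\mathbb R$ (with $(r,\ell)$ of class $\mathcal C^1$). Then for every $t\in[0,t_* )$, $$\lim_{x\to\pm\infty}w_{,x}(t,x)=w_0'(\pm\infty),\qquad \lim_{x\to\pm\infty}w_{,t}(t,x)=0 .$$
   Context: Let $Q(\xi):=\sqrt{1+\xi^2}$ and $L(u):=\int_0^uQ(\xi)\,d\xi=\tfrac12\big(u\sqrt{1+u^2}+\operatorname{arcsinh}u\big)$, a strictly increasing odd bijection of $\mathbb R$. Problem (P) is the Cauchy problem $w_{,tt}-Q^2(w_{,x})\,w_{,xx}=0$ on $[0,\infty)\times\mathbb R$, $w(0,x)=w_0(x)$, $w_{,t}(0,x)=0$, where subscripts after a comma denote partial derivatives. The Riemann invariants are $r:=w_{,t}-L(w_{,x})$, $\ell:=w_{,t}+L(w_{,x})$; with $\eta:=r-\ell$ one has $w_{,x}=L^{-1}(-\eta/2)$, and one sets $k(\eta):=Q(L^{-1}(-\eta/2))$. Then $(r,\ell)$ solves $r_{,t}+k(r-\ell)r_{,x}=0$, $\ell_{,t}-k(r-\ell)\ell_{,x}=0$, with $r(0,x)=r_0(x):=-L(w_0'(x))$, $\ell(0,x)=\ell_0(x):=L(w_0'(x))=-r_0(x)$. $[0,t_* )$ denotes the maximal interval of existence of the $\mathcal C^1$ solution $(r,\ell)$. *)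

(* Defs.v *)
From Stdlib Require Import Reals Lra.
From Coquelicot Require Import Coquelicot.
Open Scope R_scope.

Definition Q (xi : R) : R := sqrt (1 + xi ^ 2).

Definition in_dom (T : Rbar) (t : R) : Prop := 0 <= t /\ Rbar_lt t T.

(* derivative of f at t relative to [0,T) (one-sided at t = 0) *)
Definition tderiv (T : Rbar) (f : R -> R) (t l : R) : Prop :=
  filterlim (fun s => (f s - f t) / (s - t))
    (within (fun s => in_dom T s /\ s <> t) (locally t)) (locally l).

Definition cont_on (T : Rbar) (f : R -> R -> R) : Prop :=
  forall t x, in_dom T t ->
  forall eps : R, 0 < eps -> exists delta : R, 0 < delta /\
    forall s y, in_dom T s -> Rabs (s - t) < delta -> Rabs (y - x) < delta ->
      Rabs (f s y - f t x) < eps.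

(* w is a classical solution of (P) on [0,T) x R, with w_t = p, w_x = q,
   and (p,q) (equivalently (r,l)) of class C^1 on [0,T) x R. *)
Definition classical_solution (w0 : R -> R) (T : Rbar)
    (w p q : R -> R -> R) : Prop :=
  (forall t x, in_dom T t -> tderiv T (fun s => w s x) t (p t x)) /\
  (forall t x, in_dom T t -> is_derive (fun y => w t y) x (q t x)) /\
  exists pt px qt qx : R -> R -> R,
    (forall t x, in_dom T t -> tderiv T (fun s => p s x) t (pt t x)) /\
    (forall t x, in_dom T t -> is_derive (fun y => p t y) x (px t x)) /\
    (forall t x, in_dom T t -> tderiv T (fun s => q s x) t (qt t x)) /\
    (forall t x, in_dom T t -> is_derive (fun y => q t y) x (qx t x)) /\
    cont_on T w /\ cont_on T p /\ cont_on T q /\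
    cont_on T pt /\ cont_on T px /\ cont_on T qt /\ cont_on T qx /\
    (* the PDE  w_tt - Q^2(w_x) w_xx = 0 *)
    (forall t x, in_dom T t -> pt t x - (Q (q t x)) ^ 2 * qx t x = 0) /\
    (forall x, w 0 x = w0 x) /\ (forall x, p 0 x = 0).

(* Main.v *)
Require Import Defs.
From Stdlib Require Import Reals Lra Psatz ClassicalEpsilon Classical.
From Coquelicot Require Import Coquelicot.
Open Scope R_scope.

Lemma sqrt_ge1 x : 1 <= x -> 1 <= sqrt x.
Proof. intros h. apply Rle_trans with (sqrt 1). rewrite sqrt_1; lra. apply sqrt_le_1_alt; lra. Qed.

Lemma Q_ge1 u : 1 <= Q u.
Proof. unfold Q. apply sqrt_ge1. nra. Qed.

Lemma Q_le u : Q u <= 1 + Rabs u.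
Proof.
  unfold Q. rewrite <- (sqrt_square (1 + Rabs u)) by (pose proof (Rabs_pos u); lra).
  apply sqrt_le_1_alt. pose proof (Rabs_pos u). pose proof (Rsqr_abs u).
  unfold Rsqr in *. simpl. nra.
Qed.

Lemma Q_lip a b : Rabs (Q a - Q b) <= Rabs (a - b).
Proof.
  unfold Q.
  set (A := 1 + a^2). set (B := 1 + b^2).
  assert (hA : 0 <= A) by (unfold A; nra). assert (hB : 0 <= B) by (unfold B; nra).
  pose proof (sqrt_sqrt A hA). pose proof (sqrt_sqrt B hB).
  assert (sa : Rabs a <= sqrt A).
  { rewrite <- (sqrt_Rsqr_abs a). apply sqrt_le_1_alt. unfold Rsqr, A. nra. }
  assert (sb : Rabs b <= sqrt B).
  { rewrite <- (sqrt_Rsqr_abs b). apply sqrt_le_1_alt. unfold Rsqr, B. nra. }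
  assert (pa : 1 <= sqrt A). { apply sqrt_ge1. unfold A; nra. }
  assert (pb : 1 <= sqrt B). { apply sqrt_ge1. unfold B; nra. }
  assert (key : (sqrt A - sqrt B) * (sqrt A + sqrt B) = (a - b) * (a + b)).
  { unfold A, B in *. nra. }
  assert (hab : Rabs (a + b) <= sqrt A + sqrt B).
  { pose proof (Rabs_triang a b). lra. }
  assert (Rabs (sqrt A - sqrt B) * (sqrt A + sqrt B) = Rabs (a - b) * Rabs (a + b)).
  { rewrite <- (Rabs_pos_eq (sqrt A + sqrt B)) by lra. rewrite <- !Rabs_mult. now rewrite key. }
  pose proof (Rabs_pos (sqrt A - sqrt B)). pose proof (Rabs_pos (a - b)).
  pose proof (Rabs_pos (a + b)). nra.
Qed.

Lemma Q_der u : is_derive Q u (u / Q u).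
Proof.
  unfold Q. auto_derive. nra. replace (u * (u * 1)) with (u ^ 2) by ring. field. apply Rgt_not_eq. apply sqrt_lt_R0. nra.
Qed.

Lemma Q_cont u : continuous Q u.
Proof. apply (ex_derive_continuous (K:=R_AbsRing) (V:=R_NormedModule)). eexists. apply Q_der. Qed.

Definition L (u : R) : R := RInt Q 0 u.

Lemma L_der u : is_derive L u (Q u).
Proof.
  apply (is_derive_RInt Q L 0 u).
  - exists (mkposreal 1 Rlt_0_1). intros y _. unfold L. apply (RInt_correct (V:=R_CompleteNormedModule)).
    apply ex_RInt_continuous. intros; apply Q_cont.
  - apply Q_cont.
Qed.

Lemma L_cont u : continuity_pt L u.
Proof.
  apply continuity_pt_filterlim. apply (ex_derive_continuous (K:=R_AbsRing) (V:=R_NormedModule)). eexists; apply L_der.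
Qed.

Lemma L_mvt u v : exists xi, Rabs (xi - v) <= Rabs (u - v) /\ L u - L v = Q xi * (u - v).
Proof.
  destruct (MVT_gen L v u Q) as [c [hc e]].
  - intros; apply L_der.
  - intros; apply L_cont.
  - exists c. split; [|exact e].
    revert hc. unfold Rmin, Rmax. destruct Rle_dec; intros;
    unfold Rabs; repeat destruct Rcase_abs; lra.
Qed.

Lemma L_lower u v : Rabs (u - v) <= Rabs (L u - L v).
Proof.
  destruct (L_mvt u v) as [xi [_ e]]. rewrite e, Rabs_mult.
  pose proof (Q_ge1 xi). rewrite (Rabs_pos_eq (Q xi)) by lra.
  pose proof (Rabs_pos (u - v)). nra.
Qed.

Lemma L_upper u v : Rabs (L u - L v) <= (1 + Rabs v + Rabs (u - v)) * Rabs (u - v).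
Proof.
  destruct (L_mvt u v) as [xi [h e]]. rewrite e, Rabs_mult.
  pose proof (Q_ge1 xi). rewrite (Rabs_pos_eq (Q xi)) by lra.
  pose proof (Q_le xi). pose proof (Rabs_pos (u - v)).
  assert (Rabs xi <= Rabs v + Rabs (u - v)).
  { pose proof (Rabs_triang (xi - v) v). replace (xi - v + v) with xi in H2 by ring. lra. }
  nra.
Qed.

Lemma L_taylor u v : Rabs (L u - L v - Q v * (u - v)) <= (u - v)^2.
Proof.
  destruct (L_mvt u v) as [xi [h e]]. rewrite e.
  replace (Q xi * (u - v) - Q v * (u - v)) with ((Q xi - Q v) * (u - v)) by ring.
  rewrite Rabs_mult. pose proof (Q_lip xi v).
  pose proof (Rabs_pos (u - v)). pose proof (Rabs_pos (Q xi - Q v)).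
  replace ((u - v)^2) with (Rabs (u - v) * Rabs (u - v)) at 1.
  2:{ pose proof (Rle_0_sqr (u-v)) as hh; unfold Rsqr in hh. rewrite <- Rabs_mult, Rabs_pos_eq by lra. ring. }
  nra.
Qed.

Lemma der_contpt f x l : is_derive f x l -> continuity_pt f x.
Proof.
  intros H. apply continuity_pt_filterlim.
  apply (ex_derive_continuous (K:=R_AbsRing) (V:=R_NormedModule)). exists l; exact H.
Qed.

Lemma MVT_ab f df a b : a <= b -> (forall x, a < x < b -> is_derive f x (df x)) ->
  (forall x, a <= x <= b -> continuity_pt f x) ->
  exists c, a <= c <= b /\ f b - f a = df c * (b - a).
Proof.
  intros hab h1 h2. destruct (MVT_gen f a b df) as [c [hc e]].
  - rewrite Rmin_left, Rmax_right by lra. exact h1.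
  - rewrite Rmin_left, Rmax_right by lra. exact h2.
  - exists c. rewrite Rmin_left, Rmax_right in hc by lra. auto.
Qed.

Lemma MVT_all f df a b : (forall x, is_derive f x (df x)) ->
  exists c, Rabs (c - a) <= Rabs (b - a) /\ f b - f a = df c * (b - a).
Proof.
  intros h. destruct (MVT_gen f a b df) as [c [hc e]].
  - intros; apply h.
  - intros; eapply der_contpt; apply h.
  - exists c. split; [|exact e].
    revert hc. unfold Rmin, Rmax. destruct Rle_dec; intros;
    unfold Rabs; repeat destruct Rcase_abs; lra.
Qed.

Lemma tderiv_eps T f t l : tderiv T f t l -> forall eps, 0 < eps ->
  exists d, 0 < d /\ forall s, in_dom T s -> s <> t -> Rabs (s - t) < d ->
    Rabs ((f s - f t) / (s - t) - l) < eps.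
Proof.
  intros H eps he.
  assert (hl : locally l (fun y => Rabs (y - l) < eps)).
  { exists (mkposreal eps he). intros y hy. exact hy. }
  destruct (H _ hl) as [d hd].
  exists d. split. apply cond_pos. intros s hs hne hst. apply (hd s); [exact hst | split; auto].
Qed.

Lemma Rbar_gap (t : R) T : Rbar_lt t T -> exists g, 0 < g /\ forall s, s < t + g -> Rbar_lt s T.
Proof.
  destruct T as [r| |]; simpl; intros h.
  - exists (r - t). split. lra. intros s hs. simpl. lra.
  - exists 1. split. lra. auto.
  - contradiction.
Qed.

Lemma Rbar_lt_le (s t : R) T : s <= t -> Rbar_lt t T -> Rbar_lt s T.
Proof. destruct T; simpl; intros; auto; lra. Qed.

Lemma tderiv_int T f t l : 0 < t -> Rbar_lt t T -> tderiv T f t l -> is_derive f t l.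
Proof.
  intros ht hT H. apply is_derive_Reals. intros eps he.
  destruct (tderiv_eps T f t l H eps he) as [d [hd hd']].
  destruct (Rbar_gap t T hT) as [g [hg hg']].
  assert (pos : 0 < Rmin d (Rmin t g)) by (repeat apply Rmin_pos; lra).
  exists (mkposreal _ pos). simpl. intros h hh0 hh.
  pose proof (Rmin_l d (Rmin t g)). pose proof (Rmin_r d (Rmin t g)).
  pose proof (Rmin_l t g). pose proof (Rmin_r t g).
  assert (hb : - Rmin d (Rmin t g) < h < Rmin d (Rmin t g)) by (revert hh; unfold Rabs; destruct Rcase_abs; lra). destruct hb as [hb1 hb2].
  specialize (hd' (t + h)). replace (t + h - t) with h in hd' by ring.
  apply hd'.
  - split. lra. apply hg'. lra.
  - intro e. apply hh0. lra.
  - lra.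
Qed.

Lemma schwarz T w p q px qt :
  (forall t x, in_dom T t -> tderiv T (fun s => w s x) t (p t x)) ->
  (forall t x, in_dom T t -> is_derive (fun y => w t y) x (q t x)) ->
  (forall t x, in_dom T t -> is_derive (fun y => p t y) x (px t x)) ->
  (forall t x, in_dom T t -> tderiv T (fun s => q s x) t (qt t x)) ->
  cont_on T px -> cont_on T qt ->
  forall t x, 0 < t -> Rbar_lt t T -> px t x = qt t x.
Proof.
  intros Hwt Hwx Hpx Hqt Cpx Cqt t x ht hT.
  apply NNPP. intro hne.
  set (D := Rabs (px t x - qt t x)).
  assert (hD : 0 < D) by (apply Rabs_pos_lt; lra).
  assert (hin : in_dom T t) by (split; [lra|exact hT]).
  destruct (Cpx t x hin (D/3)) as [d1 [hd1 H1]]; [lra|].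
  destruct (Cqt t x hin (D/3)) as [d2 [hd2 H2]]; [lra|].
  destruct (Rbar_gap t T hT) as [g [hg hg']].
  set (h := Rmin d1 (Rmin d2 g) / 2).
  assert (hpos : 0 < h) by (unfold h; assert (0 < Rmin d1 (Rmin d2 g)) by (repeat apply Rmin_pos; lra); lra).
  pose proof (Rmin_l d1 (Rmin d2 g)). pose proof (Rmin_r d1 (Rmin d2 g)).
  pose proof (Rmin_l d2 g). pose proof (Rmin_r d2 g).
  assert (hh1 : h < d1) by (unfold h; lra).
  assert (hh2 : h < d2) by (unfold h; lra).
  assert (hhg : h < g) by (unfold h; lra).
  assert (dom : forall s, t <= s <= t + h -> in_dom T s).
  { intros s hs. split. lra. apply hg'. lra. }
  assert (wder : forall s y, t <= s <= t + h -> is_derive (fun s => w s y) s (p s y)).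
  { intros s y hs. apply (tderiv_int T). lra. apply dom; lra. apply Hwt. apply dom; lra. }
  assert (qder : forall s y, t <= s <= t + h -> is_derive (fun s => q s y) s (qt s y)).
  { intros s y hs. apply (tderiv_int T). lra. apply dom; lra. apply Hqt. apply dom; lra. }
  destruct (MVT_ab (fun s => w s (x + h) - w s x) (fun s => p s (x + h) - p s x) t (t + h))
    as [s1 [hs1 e1]].
  - lra.
  - intros s hs. apply (is_derive_minus (fun s => w s (x + h)) (fun s => w s x)); apply wder; lra.
  - intros s hs. eapply der_contpt.
    apply (is_derive_minus (fun s => w s (x + h)) (fun s => w s x)); apply wder; lra.
  - destruct (MVT_ab (fun y => p s1 y) (fun y => px s1 y) x (x + h)) as [y1 [hy1 e2]].
    + lra.
    + intros; apply Hpx; apply dom; lra.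
    + intros; eapply der_contpt; apply Hpx; apply dom; lra.
    + destruct (MVT_ab (fun y => w (t + h) y - w t y) (fun y => q (t + h) y - q t y) x (x + h))
        as [y2 [hy2 e3]].
      * lra.
      * intros y hy. apply (is_derive_minus (fun y => w (t + h) y) (fun y => w t y));
          apply Hwx; apply dom; lra.
      * intros y hy. eapply der_contpt.
        apply (is_derive_minus (fun y => w (t + h) y) (fun y => w t y)); apply Hwx; apply dom; lra.
      * destruct (MVT_ab (fun s => q s y2) (fun s => qt s y2) t (t + h)) as [s2 [hs2 e4]].
        -- lra.
        -- intros; apply qder; lra.
        -- intros; eapply der_contpt; apply qder; lra.
        -- simpl in *.
           assert (eq : px s1 y1 * h * h = qt s2 y2 * h * h).
           { replace (t + h - t) with h in * by ring. replace (x + h - x) with h in * by ring.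
             rewrite e2 in e1. rewrite e4 in e3. lra. }
           assert (eq2 : px s1 y1 = qt s2 y2).
           { apply Rmult_eq_reg_r with (h * h). lra. nra. }
           assert (A1 : Rabs (px s1 y1 - px t x) < D / 3).
           { apply H1. apply dom; lra. rewrite Rabs_pos_eq; lra. rewrite Rabs_pos_eq; lra. }
           assert (A2 : Rabs (qt s2 y2 - qt t x) < D / 3).
           { apply H2. apply dom; lra. rewrite Rabs_pos_eq; lra. rewrite Rabs_pos_eq; lra. }
           rewrite eq2 in A1. unfold D in *.
           revert A1 A2. unfold Rabs. repeat destruct Rcase_abs; lra.
Qed.

Lemma Rbar_in_dom_before T s s1 : in_dom T s1 -> 0 <= s <= s1 -> in_dom T s.
Proof. intros [h1 h2] hs. split. lra. apply (Rbar_lt_le s s1); [lra|exact h2]. Qed.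

Lemma dir T f a fx s1 y1 v :
  in_dom T s1 -> 0 < s1 -> tderiv T (fun s => f s y1) s1 a ->
  (forall s y, in_dom T s -> is_derive (fun y => f s y) y (fx s y)) -> cont_on T fx ->
  forall e, 0 < e -> exists h0, 0 < h0 /\ forall h, 0 < h < h0 ->
    Rabs (f (s1 - h) (y1 + v * h) - f s1 y1 + h * (a - v * fx s1 y1)) <= e * h.
Proof.
  intros hd hs Ht Hx Cx e he.
  destruct (tderiv_eps _ _ _ _ Ht (e/2)) as [d1 [hd1 H1]]; [lra|].
  set (K := Rabs v + 1).
  assert (hK : 0 < K) by (unfold K; pose proof (Rabs_pos v); lra).
  destruct (Cx s1 y1 hd (e/(2*K))) as [d2 [hd2 H2]].
  { apply Rdiv_lt_0_compat; lra. }
  assert (p0 : 0 < Rmin (Rmin d1 s1) (d2 / K)).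
  { repeat apply Rmin_pos; try lra. apply Rdiv_lt_0_compat; lra. }
  exists (Rmin (Rmin d1 s1) (d2 / K)). split. exact p0.
  intros h [h0 hh].
  pose proof (Rmin_l (Rmin d1 s1) (d2 / K)). pose proof (Rmin_r (Rmin d1 s1) (d2 / K)).
  pose proof (Rmin_l d1 s1). pose proof (Rmin_r d1 s1).
  assert (hK2 : h * K < d2).
  { assert (hx : h < d2 / K) by lra. apply (Rmult_lt_compat_r K) in hx; [|lra].
    unfold Rdiv in hx. rewrite Rmult_assoc, Rinv_l in hx by lra. lra. }
  assert (hhK : h <= h * K) by (unfold K; pose proof (Rabs_pos v); nra).
  assert (hdom : in_dom T (s1 - h)) by (apply (Rbar_in_dom_before T _ s1); auto; lra).
  specialize (H1 (s1 - h) hdom).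
  replace (s1 - h - s1) with (- h) in H1 by ring.
  assert (A1 : Rabs (f (s1 - h) y1 - f s1 y1 + h * a) < e / 2 * h).
  { assert (hne : s1 - h <> s1) by lra.
    assert (hab : Rabs (- h) < d1) by (rewrite Rabs_Ropp, Rabs_pos_eq; lra).
    specialize (H1 hne hab).
    replace (f (s1 - h) y1 - f s1 y1 + h * a) with
      ((-h) * ((f (s1 - h) y1 - f s1 y1) / - h - a)) by (field; lra).
    rewrite Rabs_mult, Rabs_Ropp, (Rabs_pos_eq h) by lra. nra. }
  destruct (MVT_all (fun y => f (s1 - h) y) (fun y => fx (s1 - h) y) y1 (y1 + v * h)) as [c [hc ec]].
  { intros; apply Hx; exact hdom. }
  simpl in ec. replace (y1 + v * h - y1) with (v * h) in hc, ec by ring.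
  assert (A2 : Rabs (fx (s1 - h) c - fx s1 y1) < e / (2 * K)).
  { apply H2. exact hdom. replace (s1 - h - s1) with (-h) by ring.
    rewrite Rabs_Ropp, Rabs_pos_eq; lra.
    rewrite Rabs_mult, (Rabs_pos_eq h) in hc by lra.
    assert (Rabs v * h <= h * K) by (unfold K; nra). lra. }
  replace (f (s1 - h) (y1 + v * h) - f s1 y1 + h * (a - v * fx s1 y1)) with
    ((f (s1 - h) y1 - f s1 y1 + h * a) + (v * h) * (fx (s1 - h) c - fx s1 y1))
    by (rewrite <- (Rplus_0_r (f (s1 - h) (y1 + v * h))); lra).
  eapply Rle_trans. apply Rabs_triang.
  rewrite Rabs_mult, Rabs_mult, (Rabs_pos_eq h) by lra.
  assert (Rabs v * h * Rabs (fx (s1 - h) c - fx s1 y1) <= e / 2 * h).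
  { assert (Rabs v * h * Rabs (fx (s1 - h) c - fx s1 y1) <= Rabs v * h * (e / (2 * K))).
    { apply Rmult_le_compat_l. pose proof (Rabs_pos v); nra. lra. }
    assert (Rabs v * (e / (2 * K)) <= e / 2).
    { unfold K. unfold Rdiv. rewrite Rinv_mult.
      assert (Rabs v * / (Rabs v + 1) <= 1).
      { pose proof (Rabs_pos v). apply (Rmult_le_reg_r (Rabs v + 1)). lra.
        rewrite Rmult_assoc, Rinv_l by lra. lra. }
      pose proof (Rinv_0_lt_compat 2 ltac:(lra)).
      replace (Rabs v * (e * (/ 2 * / (Rabs v + 1)))) with ((Rabs v * / (Rabs v + 1)) * (e * / 2)) by ring.
      nra. }
    nra. }
  lra.
Qed.

Lemma incr T p q pt px qt qx s1 y1 v tau :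
  in_dom T s1 -> 0 < s1 -> tau * tau = 1 ->
  tderiv T (fun s => p s y1) s1 (pt s1 y1) -> tderiv T (fun s => q s y1) s1 (qt s1 y1) ->
  (forall s y, in_dom T s -> is_derive (fun y => p s y) y (px s y)) ->
  (forall s y, in_dom T s -> is_derive (fun y => q s y) y (qx s y)) ->
  cont_on T px -> cont_on T qx ->
  pt s1 y1 - (Q (q s1 y1))^2 * qx s1 y1 = 0 -> px s1 y1 = qt s1 y1 ->
  forall e, 0 < e -> exists h0, 0 < h0 /\ forall h, 0 < h < h0 ->
    Rabs ((p (s1 - h) (y1 + v * h) + tau * L (q (s1 - h) (y1 + v * h)))
          - (p s1 y1 + tau * L (q s1 y1))
          - h * (v - tau * Q (q s1 y1)) * (px s1 y1 + tau * Q (q s1 y1) * qx s1 y1)) <= e * h.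
Proof.
  intros hd hs htau Hpt Hqt Hpx Hqx Cpx Cqx pde sch e he.
  set (Q0 := Q (q s1 y1)).
  assert (hQ0 : 1 <= Q0) by apply Q_ge1.
  set (M := Rabs (qt s1 y1 - v * qx s1 y1) + 1).
  assert (hM : 1 <= M) by (unfold M; pose proof (Rabs_pos (qt s1 y1 - v * qx s1 y1)); lra).
  set (e' := Rmin 1 (e / (3 * (1 + Q0)))).
  assert (he' : 0 < e').
  { unfold e'. apply Rmin_pos. lra. apply Rdiv_lt_0_compat; lra. }
  assert (he'1 : e' <= 1) by apply Rmin_l.
  assert (he'2 : e' * (1 + Q0) <= e / 3).
  { assert (e' <= e / (3 * (1 + Q0))) by apply Rmin_r.
    apply (Rmult_le_compat_r (1 + Q0)) in H; [|lra].
    replace (e / (3 * (1 + Q0)) * (1 + Q0)) with (e / 3) in H by (field; lra). exact H. }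
  destruct (dir T p (pt s1 y1) px s1 y1 v hd hs Hpt Hpx Cpx e' he') as [h1 [hh1 H1]].
  destruct (dir T q (qt s1 y1) qx s1 y1 v hd hs Hqt Hqx Cqx e' he') as [h2 [hh2 H2]].
  assert (h3p : 0 < e / (3 * M * M)) by (apply Rdiv_lt_0_compat; nra).
  exists (Rmin (Rmin h1 h2) (e / (3 * M * M))).
  split. { repeat apply Rmin_pos; lra. }
  intros h [h0 hh].
  pose proof (Rmin_l (Rmin h1 h2) (e / (3 * M * M))).
  pose proof (Rmin_r (Rmin h1 h2) (e / (3 * M * M))).
  pose proof (Rmin_l h1 h2). pose proof (Rmin_r h1 h2).
  specialize (H1 h ltac:(lra)). specialize (H2 h ltac:(lra)).
  set (p1 := p (s1 - h) (y1 + v * h)) in *. set (q1 := q (s1 - h) (y1 + v * h)) in *.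
  set (p0 := p s1 y1) in *. set (q0 := q s1 y1) in *.
  pose proof (L_taylor q1 q0) as HL. fold Q0 in HL.
  set (Y := qt s1 y1 - v * qx s1 y1) in *.
  set (Xp := p1 - p0 + h * (pt s1 y1 - v * px s1 y1)).
  set (Xq := q1 - q0 + h * Y).
  set (EL := L q1 - L q0 - Q0 * (q1 - q0)).
  assert (hdq : Rabs (q1 - q0) <= h * M).
  { assert (hx : q1 - q0 = Xq - h * Y) by (unfold Xq; ring). rewrite hx.
    eapply Rle_trans. apply Rabs_triang. rewrite Rabs_Ropp, Rabs_mult, (Rabs_pos_eq h) by lra.
    unfold M. fold Y. unfold Xq. nra. }
  assert (hEL : Rabs EL <= h * (e / 3)).
  { unfold EL. eapply Rle_trans. exact HL.
    assert (hM2 : h * (M * M) <= e / 3).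
    { assert (hx : h <= e / (3 * M * M)) by lra.
      apply (Rmult_le_compat_r (M * M)) in hx; [|nra].
      replace (e / (3 * M * M) * (M * M)) with (e / 3) in hx by (field; lra). exact hx. }
    assert (hsq : (q1 - q0) ^ 2 = Rabs (q1 - q0) * Rabs (q1 - q0)).
    { pose proof (Rle_0_sqr (q1 - q0)) as hh'; unfold Rsqr in hh'. rewrite <- Rabs_mult, Rabs_pos_eq by lra. ring. }
    rewrite hsq. pose proof (Rabs_pos (q1 - q0)). nra. }
  assert (htau1 : Rabs tau = 1).
  { pose proof (Rabs_pos tau). assert (Rabs tau * Rabs tau = 1) by (rewrite <- Rabs_mult, htau; apply Rabs_R1).
    nra. }
  assert (eqE : p1 + tau * L q1 - (p0 + tau * L q0) - h * (v - tau * Q0) * (px s1 y1 + tau * Q0 * qx s1 y1)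
     = Xp + tau * Q0 * Xq + tau * EL
       - h * ((pt s1 y1 - Q0 ^ 2 * qx s1 y1) + tau * Q0 * (qt s1 y1 - px s1 y1)
              + Q0 ^ 2 * qx s1 y1 * (1 - tau * tau))).
  { unfold Xp, Xq, EL, Y. ring. }
  rewrite eqE. fold Q0 in pde. rewrite pde, sch, htau.
  replace (Xp + tau * Q0 * Xq + tau * EL - h * (0 + tau * Q0 * (qt s1 y1 - qt s1 y1) + Q0 ^ 2 * qx s1 y1 * (1 - 1)))
    with (Xp + tau * Q0 * Xq + tau * EL) by ring.
  eapply Rle_trans. apply Rabs_triang.
  eapply Rle_trans. apply Rplus_le_compat_r. apply Rabs_triang.
  rewrite !Rabs_mult, htau1, (Rabs_pos_eq Q0) by lra.
  fold Xp in H1. fold Xq in H2.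
  assert (Q0 * Rabs Xq <= Q0 * (e' * h)) by (apply Rmult_le_compat_l; lra).
  nra.
Qed.

Lemma cpt_eps g u : continuity_pt g u -> forall eps, 0 < eps ->
  exists d, 0 < d /\ forall v, Rabs (v - u) < d -> Rabs (g v - g u) < eps.
Proof.
  intros H eps he. apply continuity_pt_filterlim in H.
  assert (hl : locally (g u) (fun z => Rabs (z - g u) < eps)).
  { exists (mkposreal eps he). intros y hy. exact hy. }
  destruct (H _ hl) as [d hd]. exists d. split. apply cond_pos.
  intros v hv. apply hd. exact hv.
Qed.

Lemma cont_comp T f g : cont_on T f -> (forall u, continuity_pt g u) ->
  cont_on T (fun s y => g (f s y)).
Proof.
  intros Cf Cg t x hd eps he.
  destruct (cpt_eps g (f t x) (Cg _) eps he) as [d1 [hd1 H1]].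
  destruct (Cf t x hd d1 hd1) as [d2 [hd2 H2]].
  exists d2. split. exact hd2. intros s y hs h1 h2. apply H1. apply H2; auto.
Qed.

Lemma cont_lip2 T f g (phi : R -> R -> R) K : 0 < K -> cont_on T f -> cont_on T g ->
  (forall a b c d, Rabs (phi a b - phi c d) <= K * (Rabs (a - c) + Rabs (b - d))) ->
  cont_on T (fun s y => phi (f s y) (g s y)).
Proof.
  intros hK Cf Cg Hphi t x hd eps he.
  assert (he2 : 0 < eps / (2 * K)) by (apply Rdiv_lt_0_compat; lra).
  destruct (Cf t x hd _ he2) as [d1 [hd1 H1]].
  destruct (Cg t x hd _ he2) as [d2 [hd2 H2]].
  exists (Rmin d1 d2). split. apply Rmin_pos; lra.
  intros s y hs h1 h2.
  pose proof (Rmin_l d1 d2). pose proof (Rmin_r d1 d2).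
  specialize (H1 s y hs ltac:(lra) ltac:(lra)). specialize (H2 s y hs ltac:(lra) ltac:(lra)).
  eapply Rle_lt_trans. apply Hphi.
  replace eps with (K * (eps / (2 * K) + eps / (2 * K))) by (field; lra).
  apply Rmult_lt_compat_l; lra.
Qed.

Lemma cont_time T : cont_on T (fun s y => s).
Proof. intros t x hd eps he. exists eps. split. lra. intros; auto. Qed.

Lemma tube T H s1 A B th : cont_on T H -> in_dom T s1 ->
  (forall y, A <= y <= B -> H s1 y < th) ->
  exists eta, 0 < eta /\ forall s y, in_dom T s -> s1 <= s < s1 + eta -> A <= y <= B -> H s y < th.
Proof.
  intros CH hd Hy.
  assert (ex : forall y, {d : posreal | A <= y <= B -> forall s z, in_dom T s ->
      Rabs (s - s1) < d -> Rabs (z - y) < d -> H s z < th}).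
  { intro y. apply constructive_indefinite_description.
    destruct (classic (A <= y <= B)) as [hy|hy].
    - assert (hp : 0 < th - H s1 y) by (specialize (Hy y hy); lra).
      destruct (CH s1 y hd _ hp) as [d [hd1 hd2]].
      exists (mkposreal d hd1). intros _ s z hs h1 h2. simpl in h1, h2.
      specialize (hd2 s z hs h1 h2). revert hd2. unfold Rabs. destruct Rcase_abs; lra.
    - exists (mkposreal 1 Rlt_0_1). intro; contradiction. }
  set (delta := fun y => proj1_sig (ex y)).
  destruct (compactness_value_1d A B delta) as [d hd'].
  exists d. split. apply cond_pos. intros s z hs [hs1 hs2] hz.
  apply NNPP. intro hcon. apply (hd' z hz). intros [t0 [ht0 [h1 h2]]].
  apply hcon. apply (proj2_sig (ex t0) ht0 s z hs).
  - rewrite Rabs_pos_eq by lra. unfold delta in h2. lra.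
  - exact h1.
Qed.

Definition SolH T (p q pt px qt qx : R -> R -> R) : Prop :=
  (forall t x, in_dom T t -> tderiv T (fun s => p s x) t (pt t x)) /\
  (forall t x, in_dom T t -> is_derive (fun y => p t y) x (px t x)) /\
  (forall t x, in_dom T t -> tderiv T (fun s => q s x) t (qt t x)) /\
  (forall t x, in_dom T t -> is_derive (fun y => q t y) x (qx t x)) /\
  cont_on T p /\ cont_on T q /\ cont_on T px /\ cont_on T qx /\
  (forall t x, in_dom T t -> pt t x - (Q (q t x))^2 * qx t x = 0) /\
  (forall t x, 0 < t -> Rbar_lt t T -> px t x = qt t x).

Definition rho tau (p q : R -> R -> R) s y := p s y + tau * L (q s y).

Lemma core T p q pt px qt qx tau alpha sigma s1 y1 c delta th :
  SolH T p q pt px qt qx -> tau * tau = 1 -> (sigma = 1 \/ sigma = -1) ->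
  in_dom T s1 -> 0 < s1 -> 0 < c -> Q (q s1 y1) < c -> 0 < delta ->
  sigma * (rho tau p q s1 y1 - alpha) - delta * s1 = th ->
  (forall h v, 0 < h <= s1 -> (v = c \/ v = -c) ->
     sigma * (rho tau p q (s1 - h) (y1 + v * h) - alpha) - delta * (s1 - h) <= th) ->
  False.
Proof.
  intros [Hpt [Hpx [Hqt [Hqx [Cp [Cq [Cpx [Cqx [pde sch]]]]]]]]] htau hsig hd hs hc hQ hdel hg0 hgh.
  assert (hsch : px s1 y1 = qt s1 y1) by (apply sch; [exact hs | apply hd]).
  assert (hde : 0 < delta / 2) by lra.
  destruct (incr T p q pt px qt qx s1 y1 c tau hd hs htau (Hpt _ _ hd) (Hqt _ _ hd) Hpx Hqx Cpx Cqx
     (pde _ _ hd) hsch _ hde) as [ha [hha Ha]].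
  destruct (incr T p q pt px qt qx s1 y1 (-c) tau hd hs htau (Hpt _ _ hd) (Hqt _ _ hd) Hpx Hqx Cpx Cqx
     (pde _ _ hd) hsch _ hde) as [hb [hhb Hb]].
  set (h := Rmin (Rmin ha hb) s1 / 2).
  assert (hpos : 0 < Rmin (Rmin ha hb) s1) by (repeat apply Rmin_pos; lra).
  pose proof (Rmin_l (Rmin ha hb) s1). pose proof (Rmin_r (Rmin ha hb) s1).
  pose proof (Rmin_l ha hb). pose proof (Rmin_r ha hb).
  specialize (Ha h ltac:(unfold h; lra)). specialize (Hb h ltac:(unfold h; lra)).
  pose proof (hgh h c ltac:(unfold h; lra) (or_introl eq_refl)) as Ga.
  pose proof (hgh h (-c) ltac:(unfold h; lra) (or_intror eq_refl)) as Gb.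
  assert (hh : 0 < h) by (unfold h; lra).
  unfold rho in *.
  set (Q0 := Q (q s1 y1)) in *.
  set (X := sigma * (px s1 y1 + tau * Q0 * qx s1 y1)).
  assert (htQ : Rabs (tau * Q0) < c).
  { rewrite Rabs_mult. assert (Rabs tau = 1).
    { pose proof (Rabs_pos tau). assert (Rabs tau * Rabs tau = 1) by (rewrite <- Rabs_mult, htau; apply Rabs_R1). nra. }
    rewrite H3. pose proof (Q_ge1 (q s1 y1)). fold Q0 in H4. rewrite Rabs_pos_eq by lra. lra. }
  assert (key : forall v D, Rabs (D - h * (v - tau * Q0) * (px s1 y1 + tau * Q0 * qx s1 y1)) <= delta / 2 * h ->
      sigma * D - delta * (s1 - h) + delta * s1 <= 0 ->
      (v - tau * Q0) * X <= - (delta / 2)).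
  { intros v D HH1 HH2.
    assert (e1 : sigma * D + delta * h <= 0) by lra. clear HH2.
    assert (HA : Rabs (sigma * D - h * (v - tau * Q0) * X) <= delta / 2 * h).
    { unfold X. replace (sigma * D - h * (v - tau * Q0) * (sigma * (px s1 y1 + tau * Q0 * qx s1 y1)))
        with (sigma * (D - h * (v - tau * Q0) * (px s1 y1 + tau * Q0 * qx s1 y1))) by ring.
      rewrite Rabs_mult. destruct hsig as [-> | ->]; [rewrite Rabs_R1 | replace (Rabs (-1)) with 1 by (unfold Rabs; destruct Rcase_abs; lra)]; lra. }
    assert (h * ((v - tau * Q0) * X) <= h * (- (delta / 2))).
    { revert HA. unfold Rabs. destruct Rcase_abs; intros; nra. }
    apply Rmult_le_reg_l with h; lra. }
  assert (K1 := key c _ Ha ltac:(lra)).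
  assert (K2 := key (-c) _ Hb ltac:(lra)).
  revert htQ. unfold Rabs. destruct Rcase_abs; intros; nra.
Qed.

Lemma cont_rho T p q tau : cont_on T p -> cont_on T q -> cont_on T (rho tau p q).
Proof.
  intros Cp Cq.
  pose proof (cont_comp T q L Cq L_cont) as CL.
  unfold rho.
  apply (cont_lip2 T p (fun s y => L (q s y)) (fun u w => u + tau * w) (1 + Rabs tau));
    [pose proof (Rabs_pos tau); lra | exact Cp | exact CL |].
  intros a0 b0 c0 d0.
  replace (a0 + tau * b0 - (c0 + tau * d0)) with ((a0 - c0) + tau * (b0 - d0)) by ring.
  eapply Rle_trans. apply Rabs_triang. rewrite Rabs_mult.
  pose proof (Rabs_pos tau). pose proof (Rabs_pos (a0 - c0)). pose proof (Rabs_pos (b0 - d0)).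
  nra.
Qed.

Lemma cont_absd T f a : cont_on T f -> cont_on T (fun s y => Rabs (f s y - a)).
Proof.
  intros Cf.
  apply (cont_lip2 T f f (fun u w => Rabs (u - a)) 1); [lra | exact Cf | exact Cf |].
  intros a0 b0 c0 d0. pose proof (Rabs_pos (b0 - d0)).
  unfold Rabs at 1 2 3 4; repeat destruct Rcase_abs; lra.
Qed.

Lemma cont_max T f g : cont_on T f -> cont_on T g -> cont_on T (fun s y => Rmax (f s y) (g s y)).
Proof.
  intros Cf Cg.
  apply (cont_lip2 T f g Rmax 1); [lra | exact Cf | exact Cg |].
  intros a0 b0 c0 d0. unfold Rmax. unfold Rabs.
  repeat destruct Rle_dec; repeat destruct Rcase_abs; lra.
Qed.

Lemma cont_subtime T f delta : 0 <= delta -> cont_on T f -> cont_on T (fun s y => f s y - delta * s).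
Proof.
  intros hd Cf.
  apply (cont_lip2 T f (fun s y => s) (fun u w => u - delta * w) (1 + delta)); [lra | exact Cf | apply cont_time |].
  intros a0 b0 c0 d0.
  replace (a0 - delta * b0 - (c0 - delta * d0)) with ((a0 - c0) - delta * (b0 - d0)) by ring.
  eapply Rle_trans. apply Rabs_triang. rewrite Rabs_Ropp, Rabs_mult, (Rabs_pos_eq delta) by lra.
  pose proof (Rabs_pos (a0 - c0)). pose proof (Rabs_pos (b0 - d0)). nra.
Qed.

Lemma maxp T p q pt px qt qx A B c t eps a b :
  SolH T p q pt px qt qx -> in_dom T t -> 0 < eps -> 0 < c ->
  (forall y, A <= y <= B -> Rabs (rho (-1) p q 0 y - a) <= eps /\ Rabs (rho 1 p q 0 y - b) <= eps) ->
  (forall s y, in_dom T s -> Rabs (rho (-1) p q s y - a) <= 2 * eps ->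
     Rabs (rho 1 p q s y - b) <= 2 * eps -> Q (q s y) < c) ->
  forall s y, 0 <= s <= t -> A + c * s <= y <= B - c * s ->
    Rabs (rho (-1) p q s y - a) <= 2 * eps /\ Rabs (rho 1 p q s y - b) <= 2 * eps.
Proof.
  intros HS ht he hc Hinit Hspeed s0 y0 hs0 hy0.
  pose proof HS as [_ [_ [_ [_ [Cp [Cq _]]]]]].
  apply NNPP; intro hbad.
  set (delta := eps / (2 * (t + 1))).
  assert (ht0 : 0 <= t) by apply ht.
  assert (hdel : 0 < delta) by (apply Rdiv_lt_0_compat; lra).
  assert (hdt1 : delta * (t + 1) = eps / 2) by (unfold delta; field; lra).
  assert (hdt : delta * t <= eps / 2) by nra.
  set (th := 3 * eps / 2).
  set (m1 := fun s y => Rabs (rho (-1) p q s y - a)).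
  set (m2 := fun s y => Rabs (rho 1 p q s y - b)).
  set (Hf := fun s y => Rmax (m1 s y) (m2 s y) - delta * s).
  assert (CH : cont_on T Hf).
  { apply cont_subtime. lra. apply cont_max; apply cont_absd; apply cont_rho; auto. }
  assert (dom : forall u, 0 <= u <= s0 -> in_dom T u).
  { intros u hu. apply (Rbar_in_dom_before T u t ht). lra. }
  set (S := fun u => 0 <= u <= s0 /\ exists y, A + c * u <= y <= B - c * u /\ th <= Hf u y).
  assert (HS0 : S s0).
  { split. lra. exists y0. split. exact hy0.
    assert (2 * eps < Rmax (m1 s0 y0) (m2 s0 y0)).
    { apply Rnot_le_lt. intro hle. apply hbad. split.
      - eapply Rle_trans; [apply Rmax_l|exact hle].
      - eapply Rle_trans; [apply Rmax_r|exact hle]. }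
    unfold Hf, th. assert (delta * s0 <= delta * t) by (apply Rmult_le_compat_l; lra). lra. }
  destruct (completeness (fun u => S (- u))) as [m [Hub Hlub]].
  { exists 0. intros x [hx _]. lra. }
  { exists (- s0). rewrite Ropp_involutive. exact HS0. }
  set (s1 := - m).
  assert (F1 : forall u, S u -> s1 <= u).
  { intros u hu. assert (- u <= m) by (apply Hub; rewrite Ropp_involutive; exact hu). unfold s1; lra. }
  assert (F2 : forall u', s1 < u' -> exists u, S u /\ u < u').
  { intros u' hu'. apply NNPP; intro hn.
    assert (m <= - u').
    { apply Hlub. intros x hx. apply Rnot_lt_le; intro hlt. apply hn. exists (- x). split; auto. lra. }
    unfold s1 in hu'. lra. }
  assert (hs1a : 0 <= s1).
  { assert (m <= 0). { apply Hlub. intros x [hx _]. lra. } unfold s1; lra. }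
  assert (hs1b : s1 <= s0) by (apply F1; exact HS0).
  assert (Init : forall y, A <= y <= B -> Hf 0 y <= eps).
  { intros y hy. unfold Hf. destruct (Hinit y hy). rewrite Rmult_0_r, Rminus_0_r.
    apply Rmax_lub; auto. }
  assert (C1 : forall u y, 0 <= u < s1 -> A + c * u <= y <= B - c * u -> Hf u y < th).
  { intros u y hu hy. apply Rnot_le_lt. intro hle.
    assert (S u) by (split; [lra | exists y; auto]). apply F1 in H. lra. }
  assert (C2 : forall y, A + c * s1 <= y <= B - c * s1 -> Hf s1 y <= th).
  { intros y hy. destruct (Req_dec s1 0) as [e0|ne0].
    - rewrite e0 in *. assert (Hf 0 y <= eps) by (apply Init; lra). unfold th; lra.
    - apply Rnot_lt_le. intro hlt.
      destruct (CH s1 y (dom s1 ltac:(lra)) (Hf s1 y - th)) as [d [hd Hd]]; [lra|].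
      set (u := s1 - Rmin d s1 / 2).
      assert (0 < Rmin d s1) by (apply Rmin_pos; lra).
      pose proof (Rmin_l d s1). pose proof (Rmin_r d s1).
      assert (hu : 0 <= u < s1) by (unfold u; lra).
      assert (Hf u y < th).
      { apply C1. exact hu. unfold u. split; nra. }
      assert (HH4 : Rabs (Hf u y - Hf s1 y) < Hf s1 y - th).
      { apply Hd. apply dom; lra. unfold u. replace (s1 - Rmin d s1 / 2 - s1) with (- (Rmin d s1 / 2)) by ring.
        rewrite Rabs_Ropp, Rabs_pos_eq; lra. rewrite Rminus_diag, Rabs_R0. lra. }
      revert HH4. unfold Rabs. destruct Rcase_abs; lra. }
  assert (C3 : exists y1, A + c * s1 <= y1 <= B - c * s1 /\ th <= Hf s1 y1).
  { apply NNPP. intro hn.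
    assert (hall : forall y, A + c * s1 <= y <= B - c * s1 -> Hf s1 y < th).
    { intros y hy. apply Rnot_le_lt. intro hle. apply hn. exists y. auto. }
    destruct (tube T Hf s1 (A + c * s1) (B - c * s1) th CH (dom s1 ltac:(lra)) hall) as [eta [heta Heta]].
    destruct (F2 (s1 + eta) ltac:(lra)) as [u [[hu [y [hy hth]]] hlt]].
    assert (s1 <= u) by (apply F1; split; [exact hu | exists y; auto]).
    assert (Hf u y < th).
    { apply Heta. apply dom; lra. lra. split; nra. }
    lra. }
  destruct C3 as [y1 [hy1 hth1]].
  assert (heq : Hf s1 y1 = th) by (apply Rle_antisym; [apply C2; exact hy1 | exact hth1]).
  assert (hs1 : 0 < s1).
  { destruct (Req_dec s1 0) as [e0|ne0]; [|lra].
    rewrite e0 in heq, hy1. assert (Hf 0 y1 <= eps) by (apply Init; lra). unfold th in heq; lra. }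
  assert (hmax : Rmax (m1 s1 y1) (m2 s1 y1) = th + delta * s1) by (unfold Hf in heq; lra).
  assert (hm : Rmax (m1 s1 y1) (m2 s1 y1) <= 2 * eps).
  { rewrite hmax. assert (delta * s1 <= delta * t) by (apply Rmult_le_compat_l; lra). unfold th; lra. }
  assert (hQ : Q (q s1 y1) < c).
  { apply Hspeed. apply dom; lra.
    eapply Rle_trans; [apply Rmax_l | exact hm]. eapply Rle_trans; [apply Rmax_r | exact hm]. }
  assert (gen : forall tau alpha, (tau = -1 /\ alpha = a) \/ (tau = 1 /\ alpha = b) ->
      Rabs (rho tau p q s1 y1 - alpha) = Rmax (m1 s1 y1) (m2 s1 y1) -> False).
  { intros tau alpha htal habs.
    assert (htau : tau * tau = 1) by (destruct htal as [[-> _]|[-> _]]; ring).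
    assert (hle : forall u y, Rabs (rho tau p q u y - alpha) <= Rmax (m1 u y) (m2 u y)).
    { intros u y. destruct htal as [[-> ->]|[-> ->]]; [apply Rmax_l | apply Rmax_r]. }
    set (x0 := rho tau p q s1 y1 - alpha) in habs.
    destruct (Rle_dec 0 x0) as [hx|hx].
    - apply (core T p q pt px qt qx tau alpha 1 s1 y1 c delta th HS htau (or_introl eq_refl)
        (dom s1 ltac:(lra)) hs1 hc hQ hdel).
      + rewrite Rabs_pos_eq in habs by lra. unfold x0 in habs. lra.
      + intros h v hh hv.
        assert (hy : A + c * (s1 - h) <= y1 + v * h <= B - c * (s1 - h))
          by (destruct hv as [-> | ->]; split; nra).
        pose proof (C1 (s1 - h) (y1 + v * h) ltac:(lra) hy). unfold Hf in H.
        pose proof (hle (s1 - h) (y1 + v * h)). pose proof (Rle_abs (rho tau p q (s1 - h) (y1 + v * h) - alpha)).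
        lra.
    - apply (core T p q pt px qt qx tau alpha (-1) s1 y1 c delta th HS htau (or_intror eq_refl)
        (dom s1 ltac:(lra)) hs1 hc hQ hdel).
      + rewrite Rabs_left in habs by lra. unfold x0 in habs. lra.
      + intros h v hh hv.
        assert (hy : A + c * (s1 - h) <= y1 + v * h <= B - c * (s1 - h))
          by (destruct hv as [-> | ->]; split; nra).
        pose proof (C1 (s1 - h) (y1 + v * h) ltac:(lra) hy). unfold Hf in H.
        pose proof (hle (s1 - h) (y1 + v * h)).
        pose proof (Rle_abs (- (rho tau p q (s1 - h) (y1 + v * h) - alpha))). rewrite Rabs_Ropp in H1.
        lra. }
  destruct (Rle_dec (m2 s1 y1) (m1 s1 y1)) as [hle|hle].
  - apply (gen (-1) a (or_introl (conj eq_refl eq_refl))). rewrite Rmax_left by exact hle. reflexivity.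
  - apply (gen 1 b (or_intror (conj eq_refl eq_refl))). rewrite Rmax_right by lra. reflexivity.
Qed.

Lemma final_bound T p q pt px qt qx lp A B t e :
  SolH T p q pt px qt qx -> in_dom T t -> 0 < e -> (forall y, p 0 y = 0) ->
  (forall y, A <= y <= B -> Rabs (q 0 y - lp) < Rmin (1/4) (e/4) / (2 + Rabs lp)) ->
  forall y, A + (2 + Rabs lp) * t <= y <= B - (2 + Rabs lp) * t ->
    Rabs (q t y - lp) < e /\ Rabs (p t y) < e.
Proof.
  intros HS ht he hp0 Hdat y hy.
  set (e' := Rmin (1/4) (e/4)) in *.
  assert (he' : 0 < e') by (unfold e'; apply Rmin_pos; lra).
  assert (he'1 : e' <= 1/4) by apply Rmin_l.
  assert (he'2 : e' <= e/4) by apply Rmin_r.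
  set (c := 2 + Rabs lp) in *.
  assert (hc : 2 <= c) by (unfold c; pose proof (Rabs_pos lp); lra).
  assert (hb := maxp T p q pt px qt qx A B c t e' (- L lp) (L lp) HS ht he' ltac:(lra)).
  assert (I1 : forall y, A <= y <= B -> Rabs (rho (-1) p q 0 y - - L lp) <= e' /\ Rabs (rho 1 p q 0 y - L lp) <= e').
  { intros y' hy'. unfold rho. rewrite hp0.
    specialize (Hdat y' hy').
    pose proof (L_upper (q 0 y') lp) as HU.
    assert (hq1 : Rabs (q 0 y' - lp) <= 1).
    { assert (e' / c <= 1). { apply (Rmult_le_reg_r c). lra. unfold Rdiv. rewrite Rmult_assoc, Rinv_l by lra. lra. }
      lra. }
    assert (HL : Rabs (L (q 0 y') - L lp) <= e').
    { eapply Rle_trans. exact HU.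
      assert (Rabs (q 0 y') * 0 = 0) by ring.
      assert ((1 + Rabs lp + Rabs (q 0 y' - lp)) <= c) by (unfold c; lra).
      assert (Rabs (q 0 y' - lp) * c <= e').
      { assert (Rabs (q 0 y' - lp) * c < e' / c * c) by (apply Rmult_lt_compat_r; lra).
        replace (e' / c * c) with e' in H1 by (field; lra). lra. }
      pose proof (Rabs_pos (q 0 y' - lp)). nra. }
    split.
    + replace (0 + -1 * L (q 0 y') - - L lp) with (- (L (q 0 y') - L lp)) by ring.
      rewrite Rabs_Ropp. exact HL.
    + replace (0 + 1 * L (q 0 y') - L lp) with (L (q 0 y') - L lp) by ring. exact HL. }
  assert (I2 : forall s y, in_dom T s -> Rabs (rho (-1) p q s y - - L lp) <= 2 * e' ->
     Rabs (rho 1 p q s y - L lp) <= 2 * e' -> Q (q s y) < c).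
  { intros s y' hs H1 H2. unfold rho in H1, H2.
    assert (Rabs (L (q s y') - L lp) <= 2 * e').
    { revert H1 H2. unfold Rabs. repeat destruct Rcase_abs; intros; lra. }
    pose proof (L_lower (q s y') lp).
    pose proof (Q_le (q s y')).
    assert (Rabs (q s y') <= Rabs lp + Rabs (q s y' - lp)).
    { pose proof (Rabs_triang (q s y' - lp) lp) as HT5. replace (q s y' - lp + lp) with (q s y') in HT5 by ring. lra. }
    unfold c. lra. }
  destruct (hb I1 I2 t y ltac:(split; [apply ht|lra]) hy) as [h1 h2].
  { unfold rho in h1, h2. split.
    + pose proof (L_lower (q t y) lp).
      assert (Rabs (L (q t y) - L lp) <= 2 * e').
      { revert h1 h2. unfold Rabs. repeat destruct Rcase_abs; intros; lra. }
      lra.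
    + revert h1 h2. unfold Rabs. repeat destruct Rcase_abs; intros; lra. }
Qed.

Theorem mainTheorem1
  (w0 dw0 ddw0 : R -> R) (lp lm : R) (T : Rbar) (w p q : R -> R -> R) :
  (forall x, is_derive w0 x (dw0 x)) ->
  (forall x, is_derive dw0 x (ddw0 x)) ->
  (forall x, continuous ddw0 x) ->
  (exists M : R, forall x, Rabs (dw0 x) <= M) ->
  is_lim dw0 p_infty lp ->
  is_lim dw0 m_infty lm ->
  Rbar_lt 0 T ->
  classical_solution w0 T w p q ->
  forall t : R, in_dom T t ->
    is_lim (fun x => q t x) p_infty lp /\
    is_lim (fun x => q t x) m_infty lm /\
    is_lim (fun x => p t x) p_infty 0 /\
    is_lim (fun x => p t x) m_infty 0.
Proof.
  intros Hw0 _ _ _ Hlp Hlm HT Hsol t ht.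
  destruct Hsol as [Hwt [Hwx [pt [px [qt [qx [Hpt [Hpx [Hqt [Hqx [Cw [Cp [Cq [Cpt [Cpx [Cqt [Cqx [pde [Hi0 Hp0]]]]]]]]]]]]]]]]]]].
  pose proof (schwarz T w p q px qt Hwt Hwx Hpx Hqt Cpx Cqt) as sch.
  assert (HS : SolH T p q pt px qt qx).
  { unfold SolH. do 9 (split; [auto|]). exact sch. }
  assert (hd0 : in_dom T 0) by (split; [lra | exact HT]).
  assert (q0 : forall y, q 0 y = dw0 y).
  { intro y. pose proof (Hwx 0 y hd0) as h1.
    apply (is_derive_ext _ w0) in h1; [| intro; apply Hi0].
    apply is_derive_unique in h1. rewrite <- h1. apply is_derive_unique. apply Hw0. }
  apply is_lim_spec in Hlp. apply is_lim_spec in Hlm.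
  assert (Pside : forall e, 0 < e -> exists M, forall y, M < y -> Rabs (q t y - lp) < e /\ Rabs (p t y) < e).
  { intros e he.
    assert (hη : 0 < Rmin (1/4) (e/4) / (2 + Rabs lp)).
    { apply Rdiv_lt_0_compat. apply Rmin_pos; lra. pose proof (Rabs_pos lp); lra. }
    destruct (Hlp (mkposreal _ hη)) as [M HM]. simpl in HM.
    exists (M + 1 + (2 + Rabs lp) * t). intros y hy.
    apply (final_bound T p q pt px qt qx lp (M + 1) (y + (2 + Rabs lp) * t) t e HS ht he Hp0).
    - intros y' hy'. rewrite q0. apply HM. lra.
    - lra. }
  assert (Mside : forall e, 0 < e -> exists M, forall y, y < M -> Rabs (q t y - lm) < e /\ Rabs (p t y) < e).
  { intros e he.
    assert (hη : 0 < Rmin (1/4) (e/4) / (2 + Rabs lm)).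
    { apply Rdiv_lt_0_compat. apply Rmin_pos; lra. pose proof (Rabs_pos lm); lra. }
    destruct (Hlm (mkposreal _ hη)) as [M HM]. simpl in HM.
    exists (M - 1 - (2 + Rabs lm) * t). intros y hy.
    apply (final_bound T p q pt px qt qx lm (y - (2 + Rabs lm) * t) (M - 1) t e HS ht he Hp0).
    - intros y' hy'. rewrite q0. apply HM. lra.
    - lra. }
  repeat split; apply is_lim_spec; intros [e he]; simpl.
  - destruct (Pside e he) as [M HM]. exists M. intros y hy. apply HM; auto.
  - destruct (Mside e he) as [M HM]. exists M. intros y hy. apply HM; auto.
  - destruct (Pside e he) as [M HM]. exists M. intros y hy. rewrite Rminus_0_r. apply HM; auto.
  - destruct (Mside e he) as [M HM]. exists M. intros y hy. rewrite Rminus_0_r. apply HM; auto.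
Qed.
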